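(* Let $\mathbf f=(f_1,\dots,f_n)$ be a strongly generic $n$-tuple with $R[\mathbf f]=R$. Assume $\mathbf g=(g_1,\dots,g_n)\in\mathcal G_{00}^n$ is such that for all $(i,j)\in R$, $g_i\to f_j$ and $f_i\to g_j$ in $\Gamma_{\mathcal G}$. For $(x_1,\dots,x_n)\in(0,1]^n$ let $h_i=x_if_i+(1-x_i)g_i$. Then $\mathbf h=(h_1,\dots,h_n)$ is strongly generic and $R[\mathbf h]=R$.
   Context: $\mathcal G$ is the group of strictly increasing continuous maps $f:[-1,1]\to[-1,1]$ with $f(\pm1)=\pm1$; $\mathcal G_0=\{f\in\mathcal G:\int_{-1}^1f=0\}$; $\mathcal G_{00}$ the odd elements of $\mathcal G$. $f^e(t)=\tfrac12(f(t)+f(-t))$; $Q(f,g)=\int_{-1}^1f(g^{-1}(t))\,dt$. The digraph $\Gamma_{\mathcal G}$: $f\to g$ iff $Q(g,f)>0$. $R[\mathbf f]$ is the digraph on $[n]$ with $(i,j)\in R[\mathbf f]$ iff $Q(f_j,f_i)>0$. $\mathbf f\in\mathcal G_0^n$ is strongly generic if $\{f_1^e,\dots,f_n^e\}$ is linearly independent and $Q(f_i,f_j)\ne0$ for all $i\ne j$. *)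

(* Defs.v *)
From Stdlib Require Import Reals Lra ClassicalEpsilon.
From Coquelicot Require Import Coquelicot.
Open Scope R_scope.

Definition I11 (t : R) : Prop := -1 <= t <= 1.

Definition cont_on_I (f : R -> R) : Prop :=
  forall t, I11 t -> forall eps, 0 < eps -> exists delta, 0 < delta /\
    forall s, I11 s -> Rabs (s - t) < delta -> Rabs (f s - f t) < eps.

(* The group G: strictly increasing continuous maps [-1,1] -> [-1,1] fixing +-1
   (only the restriction to [-1,1] matters). *)
Definition inG (f : R -> R) : Prop :=
  (forall t, I11 t -> I11 (f t)) /\
  (forall s t, I11 s -> I11 t -> s < t -> f s < f t) /\
  cont_on_I f /\ f (-1) = -1 /\ f 1 = 1.

Definition inG0 (f : R -> R) : Prop := inG f /\ RInt f (-1) 1 = 0.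

Definition inG00 (f : R -> R) : Prop :=
  inG f /\ forall t, I11 t -> f (- t) = - f t.

(* inverse of g on [-1,1]: the (unique, for g in G) s in [-1,1] with g s = t *)
Definition ginv (g : R -> R) (t : R) : R :=
  epsilon (inhabits 0) (fun s => I11 s /\ g s = t).

Definition Q (f g : R -> R) : R := RInt (fun t => f (ginv g t)) (-1) 1.

(* edge f -> g in Gamma_G iff Q(g,f) > 0 *)
Definition arrow (f g : R -> R) : Prop := Q g f > 0.

Definition even_part (f : R -> R) (t : R) : R := (f t + f (- t)) / 2.

(* an n-tuple is a function nat -> (R -> R), indices 0..n-1 *)
Definition lin_indep_even (n : nat) (f : nat -> R -> R) : Prop :=
  forall c : nat -> R,
    (forall t, I11 t -> sum_f_R0 (fun i => c i * even_part (f i) t) (pred n) = 0) ->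
    forall i, (i < n)%nat -> c i = 0.

Definition strongly_generic (n : nat) (f : nat -> R -> R) : Prop :=
  (forall i, (i < n)%nat -> inG0 (f i)) /\
  lin_indep_even n f /\
  (forall i j, (i < n)%nat -> (j < n)%nat -> i <> j -> Q (f i) (f j) <> 0).

(* R[f] = Rel as digraphs on [n] = {0,...,n-1}: (i,j) in R[f] iff Q(f_j,f_i) > 0 *)
Definition digraph_of_eq (n : nat) (f : nat -> R -> R) (Rel : nat -> nat -> Prop) : Prop :=
  forall i j, (i < n)%nat -> (j < n)%nat -> (Q (f j) (f i) > 0 <-> Rel i j).

(* Main.v *)
Require Import Defs.
From Stdlib Require Import Reals Lra Lia ClassicalEpsilon Classical.
From Coquelicot Require Import Coquelicot.
Open Scope R_scope.

Definition clamp (t : R) : R := Rmax (-1) (Rmin 1 t).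

Lemma clamp_I t : I11 (clamp t).
Proof. unfold clamp, I11, Rmax, Rmin; repeat destruct Rle_dec; lra. Qed.

Lemma clamp_id t : I11 t -> clamp t = t.
Proof. unfold clamp, I11, Rmax, Rmin; intros; repeat destruct Rle_dec; lra. Qed.

Lemma clamp_lip x y : Rabs (clamp y - clamp x) <= Rabs (y - x).
Proof. unfold clamp, Rmax, Rmin; repeat destruct Rle_dec; split_Rabs; lra. Qed.

Lemma cont_clamp F : cont_on_I F -> forall x, continuity_pt (fun t => F (clamp t)) x.
Proof.
  intros HF x eps Heps.
  destruct (HF (clamp x) (clamp_I x) eps Heps) as [d [Hd Hs]].
  exists d; split; [lra|]. intros y [_ Hy]. simpl in *. unfold R_dist in *.
  apply Hs; [apply clamp_I|]. eapply Rle_lt_trans; [apply clamp_lip|]. exact Hy.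
Qed.

Lemma ex_RInt_I F a b : cont_on_I F -> I11 a -> I11 b -> ex_RInt F a b.
Proof.
  intros HF Ha Hb.
  apply ex_RInt_ext with (fun t => F (clamp t)).
  { intros t Ht. rewrite clamp_id; auto. unfold I11 in *.
    unfold Rmin, Rmax in Ht; destruct Rle_dec; lra. }
  apply (@ex_RInt_continuous R_CompleteNormedModule). intros z _.
  apply continuity_pt_filterlim. apply cont_clamp; auto.
Qed.

Lemma G_le g s t : inG g -> I11 s -> I11 t -> s <= t -> g s <= g t.
Proof.
  intros [_ [Hm _]] Hs Ht Hst. destruct (Rle_lt_or_eq_dec _ _ Hst).
  - left; auto.
  - subst; lra.
Qed.

Lemma ginv_ex g t : inG g -> I11 t -> exists s, I11 s /\ g s = t.
Proof.
  intros Hg Ht. destruct Hg as [HI [Hm [Hc [Hm1 H1]]]].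
  destruct (Req_dec t (-1)) as [E|E]. { exists (-1); split; [red; lra| congruence]. }
  destruct (Req_dec t 1) as [E'|E']. { exists 1; split; [red; lra| congruence]. }
  assert (Hc' : cont_on_I (fun u => g u - t)).
  { intros u Hu eps Heps. destruct (Hc u Hu eps Heps) as [d [Hd Hs]].
    exists d; split; auto. intros s Hs1 Hs2. replace (g s - t - (g u - t)) with (g s - g u) by ring. auto. }
  destruct (IVT (fun u => g (clamp u) - t) (-1) 1) as [z [Hz Hz0]].
  - intro u. apply (cont_clamp _ Hc' u).
  - lra.
  - rewrite clamp_id by (red; lra). red in Ht; lra.
  - rewrite clamp_id by (red; lra). red in Ht; lra.
  - exists z. rewrite clamp_id in Hz0 by (red; lra). split; [red; lra| lra].
Qed.

Lemma ginv_spec g t : inG g -> I11 t -> I11 (ginv g t) /\ g (ginv g t) = t.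
Proof.
  intros Hg Ht. unfold ginv. apply epsilon_spec. apply ginv_ex; auto.
Qed.

Lemma G_inj g s s' : inG g -> I11 s -> I11 s' -> g s = g s' -> s = s'.
Proof.
  intros Hg Hs Hs' E. destruct Hg as [_ [Hm _]].
  destruct (Rtotal_order s s') as [L|[L|L]]; auto.
  - specialize (Hm _ _ Hs Hs' L); lra.
  - specialize (Hm _ _ Hs' Hs L); lra.
Qed.

Lemma ginv_unique g s t : inG g -> I11 s -> g s = t -> ginv g t = s.
Proof.
  intros Hg Hs E. assert (Ht : I11 t). { subst; apply Hg; auto. }
  destruct (ginv_spec g t Hg Ht) as [H1 H2]. apply (G_inj g); auto. congruence.
Qed.

Lemma ginv_bounds g a b t : inG g -> I11 a -> I11 b -> I11 t -> g a <= t <= g b ->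
  a <= ginv g t <= b.
Proof.
  intros Hg Ha Hb Ht [H1 H2]. destruct (ginv_spec g t Hg Ht) as [S1 S2].
  destruct Hg as [_ [Hm _]]. split.
  - destruct (Rle_or_lt a (ginv g t)) as [L|L]; auto.
    specialize (Hm _ _ S1 Ha L); lra.
  - destruct (Rle_or_lt (ginv g t) b) as [L|L]; auto.
    specialize (Hm _ _ Hb S1 L); lra.
Qed.

Lemma ginv_cont g : inG g -> cont_on_I (ginv g).
Proof.
  intros Hg t Ht eps Heps.
  destruct (ginv_spec g t Hg Ht) as [S1 S2].
  set (s0 := ginv g t) in *.
  set (e := eps / 2).
  set (D1 := if Rle_dec (s0 + e) 1 then g (s0 + e) - t else 1).
  set (D2 := if Rle_dec (-1) (s0 - e) then t - g (s0 - e) else 1).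
  assert (HD1 : 0 < D1).
  { unfold D1; destruct (Rle_dec (s0 + e) 1); [|lra].
    destruct Hg as [_ [Hm _]]. rewrite <- S2. apply Rlt_Rminus. apply Hm; auto; unfold I11 in *; unfold e in *; lra. }
  assert (HD2 : 0 < D2).
  { unfold D2; destruct (Rle_dec (-1) (s0 - e)); [|lra].
    destruct Hg as [_ [Hm _]]. rewrite <- S2 at 1. apply Rlt_Rminus. apply Hm; auto; unfold I11 in *; unfold e in *; lra. }
  exists (Rmin D1 D2). split; [apply Rmin_pos; auto|].
  intros t' Ht' Hd.
  pose proof (Rmin_l D1 D2). pose proof (Rmin_r D1 D2).
  destruct (ginv_spec g t' Hg Ht') as [T1 T2].
  set (s' := ginv g t') in *.
  assert (A1 : s' < s0 + eps).
  { destruct (Rlt_le_dec s' (s0 + eps)) as [L|L]; auto. exfalso.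
    assert (Hle : s0 + e <= 1) by (red in T1; unfold e; lra).
    unfold D1 in *; destruct (Rle_dec (s0 + e) 1); [|contradiction].
    destruct Hg as [_ [Hm _]].
    assert (g (s0 + e) < g s') by (apply Hm; auto; unfold I11 in *; unfold e; lra).
    split_Rabs; lra. }
  assert (A2 : s0 - eps < s').
  { destruct (Rlt_le_dec (s0 - eps) s') as [L|L]; auto. exfalso.
    assert (Hle : -1 <= s0 - e) by (red in T1; unfold e; lra).
    unfold D2 in *; destruct (Rle_dec (-1) (s0 - e)); [|contradiction].
    destruct Hg as [_ [Hm _]].
    assert (g s' < g (s0 - e)) by (apply Hm; auto; unfold I11 in *; unfold e; lra).
    split_Rabs; lra. }
  split_Rabs; lra.
Qed.

Lemma comp_cont f u : cont_on_I f -> cont_on_I u -> (forall t, I11 t -> I11 (u t)) ->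
  cont_on_I (fun t => f (u t)).
Proof.
  intros Hf Hu HI t Ht eps Heps.
  destruct (Hf (u t) (HI t Ht) eps Heps) as [d1 [Hd1 H1]].
  destruct (Hu t Ht d1 Hd1) as [d2 [Hd2 H2]].
  exists d2; split; auto.
Qed.

Lemma Qint_cont f g : inG f -> inG g -> cont_on_I (fun t => f (ginv g t)).
Proof.
  intros Hf Hg. apply comp_cont.
  - apply Hf.
  - apply ginv_cont; auto.
  - intros t Ht; apply (ginv_spec g t Hg Ht).
Qed.

Fixpoint ssum (u : nat -> R) (N : nat) : R :=
  match N with O => 0 | S k => ssum u k + u k end.

Lemma ssum_ext u v N : (forall k, (k < N)%nat -> u k = v k) -> ssum u N = ssum v N.
Proof.
  induction N; intros H; simpl; auto. rewrite IHN by (intros; apply H; lia). rewrite H by lia. ring.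
Qed.

Lemma ssum_plus u v N : ssum (fun k => u k + v k) N = ssum u N + ssum v N.
Proof. induction N; simpl; [ring|rewrite IHN; ring]. Qed.

Lemma ssum_scal c u N : ssum (fun k => c * u k) N = c * ssum u N.
Proof. induction N; simpl; [ring|rewrite IHN; ring]. Qed.

Lemma ssum_tele w N : ssum (fun k => w (S k) - w k) N = w N - w O.
Proof. induction N; simpl; [ring|rewrite IHN; ring]. Qed.

Lemma part_bound F (p lo hi : nat -> R) N :
  (forall k, (k < N)%nat -> p k <= p (S k)) ->
  (forall k, (k < N)%nat -> ex_RInt F (p k) (p (S k))) ->
  (forall k t, (k < N)%nat -> p k <= t <= p (S k) -> lo k <= F t <= hi k) ->
  ex_RInt F (p O) (p N) /\
  ssum (fun k => lo k * (p (S k) - p k)) N <= RInt F (p O) (p N) <=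
  ssum (fun k => hi k * (p (S k) - p k)) N.
Proof.
  induction N; intros Hp Hex Hb.
  - simpl. split; [apply ex_RInt_point|].
    assert (E : RInt F (p O) (p O) = 0) by (rewrite RInt_point; reflexivity). lra.
  - destruct IHN as [IE [IL IU]].
    + intros; apply Hp; lia.
    + intros; apply Hex; lia.
    + intros; apply Hb; auto; lia.
    + assert (E1 := Hex N (Nat.lt_succ_diag_r N)).
      assert (P1 := Hp N (Nat.lt_succ_diag_r N)).
      split; [eapply ex_RInt_Chasles; eauto|].
      rewrite <- (RInt_Chasles F _ (p N)) by auto.
      change (plus ?a ?b) with (a + b).
      assert (L : lo N * (p (S N) - p N) <= RInt F (p N) (p (S N))).
      { replace (lo N * (p (S N) - p N)) with (RInt (fun _ => lo N) (p N) (p (S N))).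
        2:{ rewrite RInt_const. unfold scal; simpl. unfold mult; simpl. ring. }
        apply RInt_le; auto. apply ex_RInt_const.
        intros t Ht. apply (Hb N t); [lia|lra]. }
      assert (U : RInt F (p N) (p (S N)) <= hi N * (p (S N) - p N)).
      { replace (hi N * (p (S N) - p N)) with (RInt (fun _ => hi N) (p N) (p (S N))).
        2:{ rewrite RInt_const. unfold scal; simpl. unfold mult; simpl. ring. }
        apply RInt_le; auto. apply ex_RInt_const.
        intros t Ht. apply (Hb N t); [lia|lra]. }
      simpl. lra.
Qed.

Lemma ssum_tele' (w u : nat -> R) N : (forall k, u k = w (S k) - w k) -> ssum u N = w N - w O.
Proof. intros H. rewrite <- ssum_tele. apply ssum_ext. intros; auto. Qed.

Lemma young_bound f g N : inG f -> inG g -> (0 < N)%nat ->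
  Rabs (Q f g + Q g f) <= 4 / INR N.
Proof.
  intros Hf Hg HN.
  assert (HNp : 0 < INR N) by (apply lt_0_INR; auto).
  set (d := / INR N).
  assert (Hd : 0 < d) by (apply Rinv_0_lt_compat; auto).
  assert (HNd : INR N * d = 1) by (unfold d; field; lra).
  set (t := fun k => -1 + 2 * INR k * d).
  assert (tI : forall k, (k <= N)%nat -> I11 (t k)).
  { intros k Hk. apply le_INR in Hk. pose proof (pos_INR k). unfold t, I11. split; nra. }
  assert (tS : forall k, t (S k) - t k = 2 * d) by (intros; unfold t; rewrite S_INR; ring).
  assert (t0 : t O = -1) by (unfold t; simpl; ring).
  assert (tN : t N = 1) by (unfold t; lra).
  set (s := fun k => ginv g (t k)).
  assert (sI : forall k, (k <= N)%nat -> I11 (s k) /\ g (s k) = t k).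
  { intros k Hk. apply ginv_spec; auto. }
  assert (s0 : s O = -1).
  { unfold s. rewrite t0. apply ginv_unique; auto; [red; lra| apply Hg]. }
  assert (sN : s N = 1).
  { unfold s. rewrite tN. apply ginv_unique; auto; [red; lra| apply Hg]. }
  assert (sM : forall k, (k < N)%nat -> s k <= s (S k)).
  { intros k Hk. destruct (sI k ltac:(lia)) as [A1 A2]. destruct (sI (S k) ltac:(lia)) as [B1 B2].
    destruct (Rle_or_lt (s k) (s (S k))) as [L|L]; auto.
    destruct Hg as [_ [Hm _]]. specialize (Hm _ _ B1 A1 L). specialize (tS k). lra. }
  set (tau := fun k => f (s k)).
  assert (tauI : forall k, (k <= N)%nat -> I11 (tau k)).
  { intros k Hk. apply Hf. apply sI; auto. }
  assert (tau0 : tau O = -1) by (unfold tau; rewrite s0; apply Hf).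
  assert (tauN : tau N = 1) by (unfold tau; rewrite sN; apply Hf).
  assert (tauM : forall k, (k < N)%nat -> tau k <= tau (S k)).
  { intros k Hk. apply G_le; auto; try apply sI; try lia. }
  destruct (part_bound (fun u => f (ginv g u)) t tau (fun k => tau (S k)) N) as [_ [L1 U1]].
  { intros k _. specialize (tS k); lra. }
  { intros k Hk. apply ex_RInt_I; [apply Qint_cont; auto| apply tI; lia| apply tI; lia]. }
  { intros k x Hk Hx.
    assert (xI : I11 x). { pose proof (tI k ltac:(lia)); pose proof (tI (S k) ltac:(lia)). unfold I11 in *; lra. }
    destruct (sI k ltac:(lia)) as [A1 A2]. destruct (sI (S k) ltac:(lia)) as [B1 B2].
    destruct (ginv_spec g x Hg xI) as [C1 C2].
    assert (Hb : s k <= ginv g x <= s (S k)) by (apply ginv_bounds; auto; lra).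
    unfold tau; split; apply G_le; auto; lra. }
  destruct (part_bound (fun u => g (ginv f u)) tau t (fun k => t (S k)) N) as [_ [L2 U2]].
  { auto. }
  { intros k Hk. apply ex_RInt_I; [apply Qint_cont; auto| apply tauI; lia| apply tauI; lia]. }
  { intros k x Hk Hx.
    assert (xI : I11 x). { pose proof (tauI k ltac:(lia)); pose proof (tauI (S k) ltac:(lia)). unfold I11 in *; lra. }
    destruct (sI k ltac:(lia)) as [A1 A2]. destruct (sI (S k) ltac:(lia)) as [B1 B2].
    destruct (ginv_spec f x Hf xI) as [C1 C2].
    assert (Hb : s k <= ginv f x <= s (S k)) by (apply ginv_bounds; auto; unfold tau in Hx; lra).
    rewrite <- A2, <- B2. split; apply G_le; auto; lra. }
  rewrite t0, tN in L1, U1. rewrite tau0, tauN in L2, U2.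
  fold (Q f g) in L1, U1. fold (Q g f) in L2, U2.
  assert (E1 : ssum (fun k => tau (S k) * (t (S k) - t k)) N + ssum (fun k => t k * (tau (S k) - tau k)) N = 0).
  { rewrite <- ssum_plus. rewrite (ssum_tele' (fun k => tau k * t k)).
    - rewrite tau0, tauN, t0, tN. ring.
    - intros; ring. }
  assert (E2 : ssum (fun k => tau k * (t (S k) - t k)) N + ssum (fun k => t (S k) * (tau (S k) - tau k)) N = 0).
  { rewrite <- ssum_plus. rewrite (ssum_tele' (fun k => tau k * t k)).
    - rewrite tau0, tauN, t0, tN. ring.
    - intros; ring. }
  assert (E3 : ssum (fun k => tau (S k) * (t (S k) - t k)) N - ssum (fun k => tau k * (t (S k) - t k)) N = 4 * d).
  { assert (ssum (fun k => tau (S k) * (t (S k) - t k)) N = ssum (fun k => tau k * (t (S k) - t k) + (2 * d * tau (S k) - 2 * d * tau k)) N) as ->.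
    { apply ssum_ext. intros k _. rewrite (tS k). ring. }
    rewrite ssum_plus. rewrite (ssum_tele' (fun k => 2 * d * tau k) (fun k => 2 * d * tau (S k) - 2 * d * tau k)).
    - rewrite tau0, tauN. ring.
    - intros; ring. }
  replace (4 / INR N) with (4 * d) by (unfold d; field; lra).
  apply Rabs_le. lra.
Qed.

Lemma young f g : inG f -> inG g -> Q f g + Q g f = 0.
Proof.
  intros Hf Hg. destruct (Req_dec (Q f g + Q g f) 0) as [E|E]; auto. exfalso.
  set (x := Q f g + Q g f) in *.
  assert (Hx : 0 < Rabs x / 4) by (pose proof (Rabs_pos_lt x E); lra).
  destruct (archimed_cor1 _ Hx) as [N [HN1 HN2]].
  pose proof (young_bound f g N Hf Hg HN2).
  assert (HNp : 0 < INR N) by (apply lt_0_INR; auto).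
  assert (4 / INR N < Rabs x).
  { unfold Rdiv. replace (Rabs x) with (4 * (Rabs x / 4)) by field. apply Rmult_lt_compat_l; lra. }
  fold x in H. lra.
Qed.

Lemma RInt_lin (u v : R -> R) a b x y : ex_RInt u x y -> ex_RInt v x y ->
  RInt (fun t => a * u t + b * v t) x y = a * RInt u x y + b * RInt v x y.
Proof.
  intros Hu Hv. apply is_RInt_unique.
  pose proof (@is_RInt_plus R_NormedModule (fun t => scal a (u t)) (fun t => scal b (v t)) x y
     (scal a (RInt u x y)) (scal b (RInt v x y))
     (is_RInt_scal _ _ _ _ _ (RInt_correct _ _ _ Hu))
     (is_RInt_scal _ _ _ _ _ (RInt_correct _ _ _ Hv))) as H.
  exact H.
Qed.

Lemma Q_lin1 f1 f2 g a b : inG f1 -> inG f2 -> inG g ->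
  Q (fun t => a * f1 t + b * f2 t) g = a * Q f1 g + b * Q f2 g.
Proof.
  intros H1 H2 Hg. unfold Q. apply RInt_lin.
  - apply ex_RInt_I; [apply Qint_cont; auto| red; lra| red; lra].
  - apply ex_RInt_I; [apply Qint_cont; auto| red; lra| red; lra].
Qed.

Lemma odd_int F : cont_on_I F -> (forall t, I11 t -> F (- t) = - F t) -> RInt F (-1) 1 = 0.
Proof.
  intros HF Hodd.
  assert (Hex : ex_RInt F (-1 * -1 + 0) (-1 * 1 + 0)).
  { apply ex_RInt_I; auto; red; lra. }
  pose proof (RInt_comp_lin F (-1) 0 (-1) 1 Hex) as H.
  replace (-1 * -1 + 0) with 1 in H by ring. replace (-1 * 1 + 0) with (-1) in H by ring.
  rewrite (RInt_ext _ F) in H.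
  2:{ intros x Hx. unfold Rmin, Rmax in Hx; destruct Rle_dec; [|lra].
      replace (-1 * x + 0) with (- x) by ring. rewrite Hodd by (red; lra).
      unfold scal; simpl; unfold mult; simpl; ring. }
  rewrite <- (opp_RInt_swap F (-1) 1) in H by (apply ex_RInt_I; auto; red; lra).
  change (opp ?a) with (- a) in H. lra.
Qed.

Lemma ginv_odd g t : inG00 g -> I11 t -> ginv g (- t) = - ginv g t.
Proof.
  intros [Hg Ho] Ht. destruct (ginv_spec g t Hg Ht) as [A1 A2].
  apply ginv_unique; auto. { unfold I11 in *; lra. }
  rewrite Ho; auto. congruence.
Qed.

Lemma Q_odd f g : inG00 f -> inG00 g -> Q f g = 0.
Proof.
  intros Hf Hg. unfold Q. apply odd_int.
  - apply Qint_cont; [apply Hf| apply Hg].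
  - intros t Ht. rewrite ginv_odd; auto. apply Hf. apply ginv_spec; auto. apply Hg.
Qed.

Lemma conv_G f g x : inG f -> inG g -> 0 < x <= 1 -> inG (fun t => x * f t + (1 - x) * g t).
Proof.
  intros [fI [fM [fC [f0 f1]]]] [gI [gM [gC [g0 g1]]]] Hx.
  split; [|split; [|split; [|split]]].
  - intros t Ht. specialize (fI t Ht). specialize (gI t Ht). unfold I11 in *. split; nra.
  - intros s t Hs Ht Hst. specialize (fM s t Hs Ht Hst). specialize (gM s t Hs Ht Hst). nra.
  - intros t Ht eps Heps.
    destruct (fC t Ht eps Heps) as [d1 [Hd1 H1]]. destruct (gC t Ht eps Heps) as [d2 [Hd2 H2]].
    exists (Rmin d1 d2). split; [apply Rmin_pos; auto|].
    intros s Hs Hst. pose proof (Rmin_l d1 d2). pose proof (Rmin_r d1 d2).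
    assert (A := H1 s Hs ltac:(lra)). assert (B := H2 s Hs ltac:(lra)).
    replace (x * f s + (1 - x) * g s - (x * f t + (1 - x) * g t)) with
      (x * (f s - f t) + (1 - x) * (g s - g t)) by ring.
    eapply Rle_lt_trans; [apply Rabs_triang|]. rewrite !Rabs_mult.
    rewrite (Rabs_right x) by lra. rewrite (Rabs_right (1 - x)) by lra.
    pose proof (Rabs_pos (g s - g t)). nra.
  - rewrite f0, g0; ring.
  - rewrite f1, g1; ring.
Qed.

Lemma Q_h fi gi fj gj xi xj : inG fi -> inG00 gi -> inG fj -> inG00 gj ->
  0 < xi <= 1 -> 0 < xj <= 1 ->
  Q (fun t => xj * fj t + (1 - xj) * gj t) (fun t => xi * fi t + (1 - xi) * gi t) =
  xj * xi * Q fj fi + xj * (1 - xi) * Q fj gi + (1 - xj) * xi * Q gj fi.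
Proof.
  intros Hfi Hgi Hfj Hgj Hxi Hxj.
  assert (Ghi : inG (fun t => xi * fi t + (1 - xi) * gi t)) by (apply conv_G; auto; apply Hgi).
  rewrite Q_lin1; auto; [|apply Hgj].
  assert (Q fj (fun t => xi * fi t + (1 - xi) * gi t) = - Q (fun t => xi * fi t + (1 - xi) * gi t) fj) as ->.
  { pose proof (young fj _ Hfj Ghi); lra. }
  assert (Q gj (fun t => xi * fi t + (1 - xi) * gi t) = - Q (fun t => xi * fi t + (1 - xi) * gi t) gj) as ->.
  { pose proof (young gj _ (proj1 Hgj) Ghi); lra. }
  rewrite !Q_lin1; auto; try apply Hgi; try apply Hgj.
  rewrite (Q_odd gi gj) by auto.
  pose proof (young fi fj Hfi Hfj). pose proof (young gi fj (proj1 Hgi) Hfj).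
  pose proof (young fi gj Hfi (proj1 Hgj)).
  nra.
Qed.

Theorem proposition4p17 (n : nat) (f g : nat -> R -> R) (Rel : nat -> nat -> Prop)
  (x : nat -> R) :
  strongly_generic n f ->
  digraph_of_eq n f Rel ->
  (forall i, (i < n)%nat -> inG00 (g i)) ->
  (forall i j, (i < n)%nat -> (j < n)%nat -> Rel i j ->
     arrow (g i) (f j) /\ arrow (f i) (g j)) ->
  (forall i, (i < n)%nat -> 0 < x i <= 1) ->
  let h := fun i t => x i * f i t + (1 - x i) * g i t in
  strongly_generic n h /\ digraph_of_eq n h Rel.
Proof.
  intros Hsg Hdig Hg Hrel Hx h.
  destruct Hsg as [HG0 [Hli Hgen]].
  assert (Hh : forall i, (i < n)%nat -> inG (h i)).
  { intros i Hi. unfold h. apply conv_G; auto; [apply HG0| apply Hg]; auto. }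
  assert (HQ : forall i j, (i < n)%nat -> (j < n)%nat ->
    Q (h j) (h i) = x j * x i * Q (f j) (f i) + x j * (1 - x i) * Q (f j) (g i)
                    + (1 - x j) * x i * Q (g j) (f i)).
  { intros i j Hi Hj. unfold h. apply Q_h; auto; try apply HG0; try apply Hg; auto. }
  assert (Hpos : forall i j, (i < n)%nat -> (j < n)%nat -> Rel i j -> Q (h j) (h i) > 0).
  { intros i j Hi Hj R. rewrite HQ by auto.
    destruct (Hrel i j Hi Hj R) as [A1 A2]. unfold arrow in *.
    assert (A3 : Q (f j) (f i) > 0) by (apply Hdig; auto).
    destruct (Hx i Hi). destruct (Hx j Hj).
    assert (0 < x j * x i) by nra.
    assert (0 <= x j * (1 - x i)) by nra.
    assert (0 <= (1 - x j) * x i) by nra.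
    assert (0 < x j * x i * Q (f j) (f i)) by nra.
    assert (0 <= x j * (1 - x i) * Q (f j) (g i)) by nra.
    assert (0 <= (1 - x j) * x i * Q (g j) (f i)) by nra.
    lra. }
  assert (Hanti : forall i j, (i < n)%nat -> (j < n)%nat -> Q (h i) (h j) = - Q (h j) (h i)).
  { intros i j Hi Hj. pose proof (young (h i) (h j) (Hh i Hi) (Hh j Hj)). lra. }
  assert (Hf_anti : forall i j, (i < n)%nat -> (j < n)%nat -> Q (f i) (f j) = - Q (f j) (f i)).
  { intros i j Hi Hj. pose proof (young (f i) (f j) (proj1 (HG0 i Hi)) (proj1 (HG0 j Hj))). lra. }
  assert (Hdh : digraph_of_eq n h Rel).
  { intros i j Hi Hj. split; [|apply Hpos; auto].
    intros HQp. destruct (classic (Rel i j)) as [R|R]; auto. exfalso.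
    destruct (Nat.eq_dec i j) as [->|Hne].
    - pose proof (Hanti j j Hj Hj). lra.
    - assert (Q (f j) (f i) <> 0) by (apply Hgen; auto).
      assert (~ Q (f j) (f i) > 0) by (intro C; apply R; apply Hdig; auto).
      assert (Q (f i) (f j) > 0) by (rewrite Hf_anti by auto; lra).
      assert (Rel j i) by (apply Hdig; auto).
      pose proof (Hpos j i Hj Hi H2). rewrite Hanti in H3 by auto. lra. }
  split; [|exact Hdh].
  split; [|split].
  - intros i Hi. split; [apply Hh; auto|].
    unfold h. rewrite RInt_lin.
    + assert (Hg0 : RInt (g i) (-1) 1 = 0).
      { destruct (Hg i Hi) as [[_ [_ [Hc _]]] Ho]. apply odd_int; auto. }
      rewrite (proj2 (HG0 i Hi)), Hg0. rewrite !Rmult_0_r, Rplus_0_r; reflexivity.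
    + apply ex_RInt_I; [apply (HG0 i Hi)| red; lra| red; lra].
    + apply ex_RInt_I; [apply (Hg i Hi)| red; lra| red; lra].
  - intros c Hc i Hi.
    assert (Hn : (0 < n)%nat) by lia.
    assert (Hci : c i * x i = 0).
    { apply (Hli (fun k => c k * x k)); auto.
      intros t Ht. rewrite <- (Hc t Ht). apply sum_eq. intros k Hk.
      assert (Hkn : (k < n)%nat) by lia.
      unfold even_part, h. destruct (Hg k Hkn) as [_ Ho]. rewrite Ho by auto. field. }
    destruct (Hx i Hi). apply Rmult_integral in Hci. destruct Hci; auto. lra.
  - intros i j Hi Hj Hne.
    assert (Q (f j) (f i) <> 0) by (apply Hgen; auto).
    destruct (Rtotal_order (Q (f j) (f i)) 0) as [L|[L|L]]; [|contradiction|].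
    + assert (Rel j i) by (apply Hdig; auto; rewrite Hf_anti by auto; lra).
      pose proof (Hpos j i Hj Hi H0). lra.
    + assert (Rel i j) by (apply Hdig; auto).
      pose proof (Hpos i j Hi Hj H0). rewrite Hanti by auto. lra.
Qed.
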